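(* The family $\mathcal{P}^+_{gd}$ is a cofinal subfamily of $\mathcal{P}^+$ (every element of $\mathcal{P}^+$ is extended by some element of $\mathcal{P}^+_{gd}$) and has the amalgamation property: for all $p_0,p_1,p_2\in\mathcal{P}^+_{gd}$ with $p_0\subseteq p_1$ and $p_0\subseteq p_2$ there exist $p_3\in\mathcal{P}^+_{gd}$ and $\alpha\in\mathrm{Aut}(\mathbb{Q},<)$ fixing $\mathrm{Dom}(p_0)\cup\mathrm{Rng}(p_0)$ pointwise such that $p_1\subseteq p_3$ and $\alpha(p_2)\subseteq p_3$. The same holds for $\mathcal{P}^-_{gd}$ and $\mathcal{P}^-$.
   Context: $\mathcal{P}$ is the set of finite partial isomorphisms of $(\mathbb{Q},<)$ (order-preserving bijections between finite subsets), ordered by extension $\subseteq$; for $\alpha\in\mathrm{Aut}(\mathbb{Q},<)$, $\alpha(p)$ has graph $\{(\alpha(x),\alpha(y)):(x,y)\in\mathrm{Graph}(p)\}$. For $a\in\mathrm{Dom}(p)\cup\mathrm{Rng}(p)$, the parity $\wp_p(a)$ is the sign ($+,0,-$) of $p(a)-a$ if $a\in\mathrm{Dom}(p)$, or of $a-p^{-1}(a)$ if $a\in\mathrm{Rng}(p)$. Elements $a,b\in\mathbb{Q}$ are $p$-related if $a=b$, or if $\wp_p(a)=+$ or $\wp_p(b)=+$ and one of $a\le b\le p(a)$, $b\le a\le p(b)$, $p^{-1}(a)\le b\le a$, $p^{-1}(b)\le a\le b$ holds, or if $\wp_p(a)=-$ or $\wp_p(b)=-$ and one of $a\le b\le p^{-1}(a)$,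 $b\le a\le p^{-1}(b)$, $p(a)\le b\le a$, $p(b)\le a\le b$ holds (when defined). The $\sim_p$-classes of the equivalence relation generated by $p$-relatedness are $p$-orbitals; those meeting $\mathrm{Dom}(p)\cup\mathrm{Rng}(p)$ are colored $p$-orbitals, with parity given by $\wp_p$. $\mathcal{P}^+$ ($\mathcal{P}^-$) is the set of $p\in\mathcal{P}$ all of whose colored $p$-orbitals have parity $+$ (resp. $-$). A bad pair of $p$ is a pair $a<a'$ of elements of $\mathrm{Dom}(p)\cup\mathrm{Rng}(p)$ such that either the colored $p$-orbitals of $a,a'$ (possibly equal) and all colored $p$-orbitals between them have parity $+$ and $p(a)$ and $p^{-1}(a')$ are undefined, or they all have parity $-$ and $p(a')$ and $p^{-1}(a)$ are undefined. $\mathcal{P}^+_{gd}$ ($\mathcal{P}^-_{gd}$) is the set of $p\in\mathcal{P}^+$ (resp. $\mathcal{P}^-$) with a single colored $p$-orbital and no bad pairs. *)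

(* Defs.v *)
From Stdlib Require Import Relations.
From mathcomp Require Import all_boot all_order all_algebra.
Set Implicit Arguments. Unset Strict Implicit. Unset Printing Implicit Defensive.
Import Order.TTheory GRing.Theory Num.Theory.
Local Open Scope ring_scope.

(* A finite partial map on Q is represented by (a finite list giving) its graph. *)
Definition pmap := seq (rat * rat).

(* Finite partial isomorphism of (Q,<): order-preserving bijection between
   finite subsets (on a total order this also gives functionality/injectivity). *)
Definition is_pi (p : pmap) : Prop :=
  forall a b a' b', (a, b) \in p -> (a', b') \in p -> (a < a') = (b < b').

Definition extends (q p : pmap) : Prop := {subset p <= q}.

Definition in_dom (p : pmap) (a : rat) : Prop := exists b, (a, b) \in p.
Definition in_rng (p : pmap) (a : rat) : Prop := exists b, (b, a) \in p.
Definition in_DR (p : pmap) (a : rat) : Prop := in_dom p a \/ in_rng p a.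

Inductive sgn := Pos | Zero | Neg.
Definition sign_of (x : rat) : sgn :=
  if 0 < x then Pos else if x == 0 then Zero else Neg.

Definition parity (p : pmap) (a : rat) (s : sgn) : Prop :=
  exists b, ((a, b) \in p /\ sign_of (b - a) = s) \/
            ((b, a) \in p /\ sign_of (a - b) = s).

Definition related (p : pmap) (a b : rat) : Prop :=
  a = b \/
  ((parity p a Pos \/ parity p b Pos) /\
    ((exists c, (a, c) \in p /\ a <= b /\ b <= c) \/
     (exists c, (b, c) \in p /\ b <= a /\ a <= c) \/
     (exists c, (c, a) \in p /\ c <= b /\ b <= a) \/
     (exists c, (c, b) \in p /\ c <= a /\ a <= b))) \/
  ((parity p a Neg \/ parity p b Neg) /\
    ((exists c, (c, a) \in p /\ a <= b /\ b <= c) \/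
     (exists c, (c, b) \in p /\ b <= a /\ a <= c) \/
     (exists c, (a, c) \in p /\ c <= b /\ b <= a) \/
     (exists c, (b, c) \in p /\ c <= a /\ a <= b))).

(* ~_p : equivalence relation generated by p-relatedness;
   the p-orbital of a is the class {b | sim p a b}. *)
Definition sim (p : pmap) : relation rat := clos_refl_sym_trans rat (related p).

Definition orbital_parity (p : pmap) (a : rat) (s : sgn) : Prop :=
  forall b, sim p a b -> in_DR p b -> parity p b s.

Definition Psign (s : sgn) (p : pmap) : Prop :=
  is_pi p /\ forall a, in_DR p a -> orbital_parity p a s.

Definition single_colored (p : pmap) : Prop :=
  (exists a, in_DR p a) /\ forall a b, in_DR p a -> in_DR p b -> sim p a b.

Definition between_parity (p : pmap) (a a' : rat) (s : sgn) : Prop :=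
  orbital_parity p a s /\ orbital_parity p a' s /\
  forall x, in_DR p x -> a <= x -> x <= a' -> orbital_parity p x s.

Definition bad_pair (p : pmap) (a a' : rat) : Prop :=
  in_DR p a /\ in_DR p a' /\ a < a' /\
  ((between_parity p a a' Pos /\ ~ in_dom p a /\ ~ in_rng p a') \/
   (between_parity p a a' Neg /\ ~ in_dom p a' /\ ~ in_rng p a)).

Definition Pgd (s : sgn) (p : pmap) : Prop :=
  Psign s p /\ single_colored p /\ forall a a', ~ bad_pair p a a'.

Definition is_aut (f : rat -> rat) : Prop :=
  bijective f /\ forall x y, x < y -> f x < f y.

Definition act (f : rat -> rat) (p : pmap) : pmap :=
  [seq (f xy.1, f xy.2) | xy <- p].

(* Main.v *)
Require Import Defs.
From mathcomp Require Import all_boot all_order all_algebra.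
From mathcomp Require Import ring lra zify.
From Stdlib Require Import Relations ClassicalEpsilon.
Import Order.TTheory GRing.Theory Num.Theory.
Local Open Scope ring_scope.

Definition bend (l u a a' x : rat) : rat :=
  if x <= l then x else if x <= a then l + (x - l) * ((a' - l) / (a - l))
  else if x <= u then a' + (x - a) * ((u - a') / (u - a)) else x.






Lemma s1P {l u a a' : rat} (hla : l < a) (hla' : l < a') (hau : a < u) (ha'u : a' < u) : 0 < ((a' - l) / (a - l)) /\ ((a' - l) / (a - l)) * (a - l) = a' - l /\ ((a' - l) / (a - l)) * ((a - l) / (a' - l)) = 1.
Proof.
split; first by apply: divr_gt0; lra.
have e1 : a - l != 0 by rewrite subr_eq0 gt_eqF.
have e2 : a' - l != 0 by rewrite subr_eq0 gt_eqF.
split; first by field.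
by field; rewrite e1 e2.
Qed.
Lemma s2P {l u a a' : rat} (hla : l < a) (hla' : l < a') (hau : a < u) (ha'u : a' < u) : 0 < ((u - a') / (u - a)) /\ ((u - a') / (u - a)) * (u - a) = u - a' /\ ((u - a') / (u - a)) * ((u - a) / (u - a')) = 1.
Proof.
split; first by apply: divr_gt0; lra.
have e1 : u - a != 0 by rewrite subr_eq0 gt_eqF.
have e2 : u - a' != 0 by rewrite subr_eq0 gt_eqF.
split; first by field.
by field; rewrite e1 e2.
Qed.

Lemma bend_out {l u a a' : rat} (hla : l < a) (hla' : l < a') (hau : a < u) (ha'u : a' < u) x : x <= l \/ u <= x -> bend l u a a' x = x.
Proof.
have [h1 [h2 h3]] := s2P hla hla' hau ha'u.
rewrite /bend => -[hx|hx]; first by rewrite hx.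
have -> : (x <= l) = false by apply/negbTE; rewrite -ltNge; lra.
have -> : (x <= a) = false by apply/negbTE; rewrite -ltNge; lra.
case: ifP => // hxu; have -> : x = u by apply/eqP; rewrite eq_le hxu hx.
nra.
Qed.

Lemma bend_a {l u a a' : rat} (hla : l < a) (hla' : l < a') (hau : a < u) (ha'u : a' < u) : bend l u a a' a = a'.
Proof.
have [h1 [h2 h3]] := s1P hla hla' hau ha'u.
rewrite /bend lexx.
have -> : (a <= l) = false by apply/negbTE; rewrite -ltNge; lra.
nra.
Qed.

Lemma bend_reg {l u a a' : rat} (hla : l < a) (hla' : l < a') (hau : a < u) (ha'u : a' < u) x :
  (x <= l /\ bend l u a a' x = x) \/
  (l < x <= a /\ bend l u a a' x = l + (x - l) * ((a' - l) / (a - l)) /\ l < bend l u a a' x <= a') \/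
  (a < x <= u /\ bend l u a a' x = a' + (x - a) * ((u - a') / (u - a)) /\ a' < bend l u a a' x <= u) \/
  (u < x /\ bend l u a a' x = x).
Proof.
have [h1 [h2 h3]] := s1P hla hla' hau ha'u; have [k1 [k2 k3]] := s2P hla hla' hau ha'u.
rewrite /bend.
case: (lerP x l) => hxl; first by left.
case: (lerP x a) => hxa.
  right; left; split; first by apply/andP; split; lra.
  split=> //; apply/andP; split; nra.
case: (lerP x u) => hxu.
  right; right; left; split; first by apply/andP; split; lra.
  split=> //; apply/andP; split; nra.
by right; right; right.
Qed.

Lemma bend_incr {l u a a' : rat} (hla : l < a) (hla' : l < a') (hau : a < u) (ha'u : a' < u) x y : x < y -> bend l u a a' x < bend l u a a' y.
Proof.
have [h1 [h2 h3]] := s1P hla hla' hau ha'u; have [k1 [k2 k3]] := s2P hla hla' hau ha'u.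
move=> hxy.
case: (bend_reg hla hla' hau ha'u x) => [[hx ->]|[[/andP[hx1 hx2] [-> /andP[hb1 hb2]]]|[[/andP[hx1 hx2] [-> /andP[hb1 hb2]]]|[hx ->]]]];
case: (bend_reg hla hla' hau ha'u y) => [[hy ->]|[[/andP[hy1 hy2] [-> /andP[hc1 hc2]]]|[[/andP[hy1 hy2] [-> /andP[hc1 hc2]]]|[hy ->]]]];
 try lra; nra.
Qed.



Lemma bendK {l u a a'} : l < a -> l < a' -> a < u -> a' < u ->
  cancel (bend l u a a') (bend l u a' a).
Proof.
move=> hla hla' hau ha'u x.
have [h1 [h2 h3]] := s1P hla hla' hau ha'u.
have [k1 [k2 k3]] := s2P hla hla' hau ha'u.
case: (bend_reg hla hla' hau ha'u x) => [[hx ->]|[[/andP[hx1 hx2] [-> /andP[hb1 hb2]]]|[[/andP[hx1 hx2] [-> /andP[hb1 hb2]]]|[hx ->]]]].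
- by rewrite (bend_out hla' hla ha'u hau) //; left.
- case: (bend_reg hla' hla ha'u hau (l + (x - l) * ((a' - l) / (a - l)))) =>
   [[hy ->]|[[/andP[hy1 hy2] [-> /andP[hc1 hc2]]]|[[/andP[hy1 hy2] [-> /andP[hc1 hc2]]]|[hy ->]]]]; try lra.
  rewrite -addrA mulrA [X in l + X](_ : _ = (x - l) * (((a' - l) / (a - l)) * ((a - l) / (a' - l)))); last by ring.
  rewrite h3 mulr1; ring.
- case: (bend_reg hla' hla ha'u hau (a' + (x - a) * ((u - a') / (u - a)))) =>
   [[hy ->]|[[/andP[hy1 hy2] [-> /andP[hc1 hc2]]]|[[/andP[hy1 hy2] [-> /andP[hc1 hc2]]]|[hy ->]]]]; try lra.
  rewrite [X in a + X](_ : _ = (x - a) * (((u - a') / (u - a)) * ((u - a) / (u - a')))); last by ring.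
  rewrite k3 mulr1; ring.
- by rewrite (bend_out hla' hla ha'u hau) //; right; lra.
Qed.

Definition incr (f : rat -> rat) := forall x y, x < y -> f x < f y.

Lemma incr_le {f} : incr f -> forall x y, (f x <= f y) = (x <= y).
Proof. by move=> hf x y; apply: (le_mono hf). Qed.
Lemma incr_lt {f} : incr f -> forall x y, (f x < f y) = (x < y).
Proof. by move=> hf x y; apply: (leW_mono (le_mono hf)). Qed.
Lemma incr_inj {f} : incr f -> injective f.
Proof. by move=> hf x y e; apply/eqP; rewrite eq_le -(incr_le hf x y) -(incr_le hf y x) e lexx. Qed.

Definition lo_bound (m : rat) (X : seq rat) :=
  foldr (fun x acc => if (x < m) && (acc < x) then x else acc) (m - 1) X.
Definition hi_bound (M : rat) (X : seq rat) :=
  foldr (fun x acc => if (M < x) && (x < acc) then x else acc) (M + 1) X.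

Lemma lo_boundP m X : lo_bound m X < m /\ forall x, x \in X -> x < m -> x <= lo_bound m X.
Proof.
elim: X => [|y X [IH1 IH2]] /=; first by split=> //; lra.
case: ifP => [/andP[h1 h2]|/negbT hn]; split=> //.
- move=> x; rewrite inE => /orP[/eqP->//|hx hxm].
  by apply: le_trans (IH2 x hx hxm) _; apply: ltW.
- move=> x; rewrite inE => /orP[/eqP->|hx hxm]; last exact: IH2.
  by move: hn; rewrite negb_and -!leNgt => /orP[h|h]; [lra|].
Qed.

Lemma hi_boundP M X : M < hi_bound M X /\ forall x, x \in X -> M < x -> hi_bound M X <= x.
Proof.
elim: X => [|y X [IH1 IH2]] /=; first by split=> //; lra.
case: ifP => [/andP[h1 h2]|/negbT hn]; split=> //.
- move=> x; rewrite inE => /orP[/eqP->//|hx hxm].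
  by apply: le_trans _ (IH2 x hx hxm); apply: ltW.
- move=> x; rewrite inE => /orP[/eqP->|hx hxm]; last exact: IH2.
  by move: hn; rewrite negb_and -!leNgt => /orP[h|h]; [lra|].
Qed.

Lemma is_pi_cons {a b p} : is_pi ((a, b) :: p) -> is_pi p.
Proof. by move=> h x y x' y' hx hx'; apply: h; rewrite inE ?hx ?hx' orbT. Qed.

Lemma interp {p : Defs.pmap} : is_pi p ->
  exists f h : rat -> rat, [/\ incr f, cancel f h, cancel h f &
    forall a b, (a, b) \in p -> f a = b].
Proof.
elim: p => [|[a b] p IH] hp.
  by exists id, id; split.
have [f [h [fi fK hK fp]]] := IH (is_pi_cons hp).
set a' := h b.
set m := Num.min a a'; set M := Num.max a a'.
set X := [seq xy.1 | xy <- p].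
have [hl1 hl2] := lo_boundP m X; have [hu1 hu2] := hi_boundP M X.
set l := lo_bound m X in hl1 hl2; set u := hi_bound M X in hu1 hu2.
have hla : l < a by apply: lt_le_trans hl1 _; rewrite ge_min lexx.
have hla' : l < a' by apply: lt_le_trans hl1 _; rewrite ge_min lexx orbT.
have hau : a < u by apply: le_lt_trans _ hu1; rewrite le_max lexx.
have ha'u : a' < u by apply: le_lt_trans _ hu1; rewrite le_max lexx orbT.
have gap : forall x y, (x, y) \in p -> x <= l \/ u <= x \/ (x = a /\ a' = a).
  move=> x y hxy.
  have hab : (a, b) \in (a, b) :: p by rewrite inE eqxx.
  have hxy' : (x, y) \in (a, b) :: p by rewrite inE hxy orbT.
  have e1 := hp _ _ _ _ hxy' hab; have e2 := hp _ _ _ _ hab hxy'.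
  have fy : f x = y := fp _ _ hxy.
  have fb : f a' = b by rewrite /a' hK.
  rewrite -fy -fb !(incr_lt fi) in e1 e2.
  have xX : x \in X by apply/mapP; exists (x, y).
  case: (ltgtP x a) => hxa.
  - left; apply: hl2 => //; rewrite lt_min hxa /= -e1 //.
  - right; left; apply: hu2 => //; rewrite gt_max hxa /= -e2 //.
  - right; right; split=> //; subst x; apply/eqP; rewrite eq_le !leNgt -e1 -e2 ltxx //.
exists (f \o bend l u a a'), (bend l u a' a \o h); split.
- by move=> x y hxy /=; apply: fi; apply: bend_incr.
- by move=> x /=; rewrite fK (bendK hla hla' hau ha'u).
- by move=> x /=; rewrite (bendK hla' hla ha'u hau) hK.
- move=> x y; rewrite inE => /orP[/eqP[-> ->]|hxy] /=.
    by rewrite bend_a // /a' hK.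
  rewrite -(fp _ _ hxy); congr f.
  case: (gap _ _ hxy) => [h1|[h1|[-> e]]].
  + by apply: bend_out => //; left.
  + by apply: bend_out => //; right.
  + by rewrite bend_a // e.
Qed.

Definition gmax (f : rat -> rat) (d x : rat) := if f x < x + d then x + d else f x.
Definition gmin (h : rat -> rat) (d y : rat) := if y - d < h y then y - d else h y.

Lemma maxtrick {f h d} : incr f -> cancel f h -> cancel h f -> 0 < d ->
  [/\ incr (gmax f d), cancel (gmax f d) (gmin h d), cancel (gmin h d) (gmax f d),
      (forall x, x + d <= gmax f d x) &
      (forall x, x + d <= f x -> gmax f d x = f x)].
Proof.
move=> fi fK hK d0; split.
- move=> x y hxy; rewrite /gmax.
  have := fi _ _ hxy.
  case: (ltP (f x) (x + d)) => h1; case: (ltP (f y) (y + d)) => h2 hf; lra.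
- move=> x; rewrite /gmax /gmin.
  case: (ltP (f x) (x + d)) => h1.
  + rewrite addrK.
    have -> : x < h (x + d) by rewrite -(incr_lt fi) hK.
    done.
  + rewrite fK; case: (ltP (f x - d) x) => h2 //; lra.
- move=> y; rewrite /gmax /gmin.
  case: (ltP (y - d) (h y)) => h1.
  + have -> : f (y - d) < y - d + d.
      by rewrite subrK -{2}(hK y) (incr_lt fi).
    by rewrite subrK.
  + rewrite hK; case: (ltP y (h y + d)) => h2 //; lra.
- by move=> x; rewrite /gmax; case: (ltP (f x) (x + d)) => h1 //; lra.
- by move=> x hx; rewrite /gmax; case: (ltP (f x) (x + d)) => h1 //; lra.
Qed.

Section Iter.
Variables (g gi : rat -> rat) (d : rat).
Hypotheses (gI : incr g) (gK : cancel g gi) (giK : cancel gi g) (d0 : 0 < d)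
  (gd : forall x, x + d <= g x).

Lemma gid x : gi x + d <= x.
Proof. by have := gd (gi x); rewrite giK. Qed.

Lemma iter_g_ge n x : x + n%:R * d <= iter n g x.
Proof.
elim: n x => [|n IH] x /=; first by rewrite mul0r addr0.
have := gd (iter n g x); have := IH x; rewrite -natr1 mulrDl mul1r.
move=> h1 h2; move: h1 h2 d0; lra.
Qed.

Lemma iter_gi_le n x : iter n gi x + n%:R * d <= x.
Proof.
elim: n x => [|n IH] x /=; first by rewrite mul0r addr0.
have := gid (iter n gi x); have := IH x; rewrite -natr1 mulrDl mul1r.
move=> h1 h2; move: h1 h2 d0; lra.
Qed.

Lemma iter_gK n : cancel (iter n g) (iter n gi).
Proof. elim: n => [|n IH] x //; by rewrite [iter n.+1 g x]iterSr /= IH gK. Qed.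
Lemma iter_giK n : cancel (iter n gi) (iter n g).
Proof. elim: n => [|n IH] x //; by rewrite [iter n.+1 gi x]iterSr /= IH giK. Qed.
Lemma iter_incr n : incr (iter n g).
Proof. elim: n => [|n IH] x y //= hxy; by apply: gI; apply: IH. Qed.
Lemma iter_gi_incr n : incr (iter n gi).
Proof.
have giI : incr gi.
  move=> x y hxy; rewrite -(incr_lt gI) !giK //.
elim: n => [|n IH] x y //= hxy; by apply: giI; apply: IH.
Qed.
End Iter.
Arguments iter_g_ge {g d}. Arguments iter_gi_le {g gi d}. Arguments gid {g gi d}.
Arguments iter_gK {g gi}. Arguments iter_giK {g gi}. Arguments iter_incr {g}.
Arguments iter_gi_incr {g gi}.

Lemma iter_add (g : rat -> rat) m n x : iter (m + n) g x = iter m g (iter n g x).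
Proof. by rewrite iterD. Qed.

Definition restr (g : rat -> rat) (B : seq rat) (N : nat) : Defs.pmap :=
  [seq (iter n g b, iter n.+1 g b) | b <- B, n <- iota 0 N].

Lemma simT {p x y z} : sim p x y -> sim p y z -> sim p x z.
Proof. exact: rst_trans. Qed.
Lemma simS {p x y} : sim p x y -> sim p y x.
Proof. exact: rst_sym. Qed.
Lemma simR {p x} : sim p x x.
Proof. exact: rst_refl. Qed.
Lemma simR1 {p x y} : related p x y -> sim p x y.
Proof. exact: rst_step. Qed.

Section Restr.
Variables (g : rat -> rat) (B : seq rat) (N : nat).
Hypotheses (gI : incr g) (gup : forall x, x < g x) (N0 : (0 < N)%N).

Lemma mem_restr x y : (x, y) \in restr g B N <->
  exists b n, [/\ b \in B, (n < N)%N, x = iter n g b & y = iter n.+1 g b].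
Proof.
split.
- case/allpairsP => [[b n] /= [hb hn [-> ->]]]; exists b, n; split => //.
  by move: hn; rewrite mem_iota.
- case=> b [n [hb hn -> ->]]; apply/allpairsP; exists (b, n); split => //.
  by rewrite mem_iota.
Qed.

Lemma restr_pair {x y} : (x, y) \in restr g B N -> y = g x.
Proof. by case/mem_restr => b [n [_ _ -> ->]]. Qed.

Lemma restr_DR x : in_DR (restr g B N) x <->
  exists b n, [/\ b \in B, (n <= N)%N & x = iter n g b].
Proof.
split.
- case=> [[y /mem_restr [b [n [hb hn -> _]]]]|[y /mem_restr [b [n [hb hn _ ->]]]]].
  + by exists b, n; split => //; apply: ltnW.
  + by exists b, n.+1.
- case=> b [n [hb hn ->]].
  case: (ltnP n N) => hnN.
  + by left; exists (iter n.+1 g b); apply/mem_restr; exists b, n.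
  + have -> : n = N by apply/eqP; rewrite eqn_leq hn hnN.
    right; exists (iter N.-1 g b); apply/mem_restr; exists b, N.-1.
    by rewrite prednK //; split => //; rewrite ltn_predL.
Qed.

Lemma sign_pos v : 0 < v -> sign_of v = Pos.
Proof. by rewrite /sign_of => ->. Qed.
Lemma sign_neg v : sign_of v = Neg -> ~ 0 < v.
Proof. by rewrite /sign_of; case: ifP. Qed.

Lemma restr_parity_pos x : in_DR (restr g B N) x -> parity (restr g B N) x Pos.
Proof.
case=> [[y hy]|[y hy]]; exists y.
- by left; split => //; rewrite (restr_pair hy); apply: sign_pos; rewrite subr_gt0.
- by right; split => //; rewrite (restr_pair hy); apply: sign_pos; rewrite subr_gt0.
Qed.

Lemma restr_no_neg x : ~ parity (restr g B N) x Neg.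
Proof.
case=> y [[hy /sign_neg]|[hy /sign_neg]]; rewrite (restr_pair hy) subr_gt0; apply; exact: gup.
Qed.

Lemma rel_step {x y z} : (x, y) \in restr g B N -> x <= z -> z <= y ->
  related (restr g B N) x z.
Proof.
move=> hxy h1 h2; right; left; split.
  by left; apply: restr_parity_pos; left; exists y.
by left; exists y.
Qed.

Lemma chain_sim {b n} : b \in B -> (n <= N)%N -> sim (restr g B N) (iter n g b) b.
Proof.
move=> hb; elim: n => [|n IH] hn; first exact: simR.
apply: simT (IH (ltnW hn)).
apply: simS; apply: simR1; apply: (@rel_step _ (iter n.+1 g b)).
- by apply/mem_restr; exists b, n.
- by apply/ltW/gup.
- by [].
Qed.

Lemma find_step (v : nat -> rat) t M : v 0%N <= t -> t < v M ->
  exists n, [/\ (n < M)%N, v n <= t & t < v n.+1].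
Proof.
elim: M => [|M IH] h1 h2; first by move: h1 h2; lra.
case: (ltP t (v M)) => h3.
- by have [n [hn ? ?]] := IH h1 h3; exists n; split => //; apply: ltnW.
- by exists M.
Qed.

Lemma restr_good : B != [::] -> (forall b b', b \in B -> b' \in B -> b' < iter N g b) ->
  Pgd Pos (restr g B N).
Proof.
move=> Bn hB.
have bsim : forall b b', b \in B -> b' \in B -> b <= b' -> sim (restr g B N) b b'.
  move=> b b' hb hb' hbb'.
  have [n [hn h1 h2]] := @find_step (fun n => iter n g b) b' N hbb' (hB _ _ hb hb').
  apply: simT (simS (chain_sim hb (ltnW hn))) _.
  apply: simR1; apply: (@rel_step _ (iter n.+1 g b)) => //.
  - by apply/mem_restr; exists b, n.
  - exact: ltW.
have Pall : forall x, in_DR (restr g B N) x -> orbital_parity (restr g B N) x Pos.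
  by move=> x _ y _ hy; apply: restr_parity_pos.
split; [split|split].
- move=> x y x' y' h1 h2; rewrite (restr_pair h1) (restr_pair h2).
  by rewrite (incr_lt gI).
- exact: Pall.
- split.
  + have hb0 : head 0 B \in B by move: Bn; case: (B) => //= a s _; rewrite inE eqxx.
    by exists (head 0 B); apply/restr_DR; exists (head 0 B), 0%N.
  + move=> x y /restr_DR [b [n [hb hn ->]]] /restr_DR [b' [n' [hb' hn' ->]]].
    apply: simT (chain_sim hb hn) _.
    apply: simT _ (simS (chain_sim hb' hn')).
    case: (leP b b') => hbb'; first exact: bsim.
    by apply: simS; apply: bsim => //; apply: ltW.
- move=> a a' [ha [ha' [haa' [[_ [hna hna']]|[[hneg _] _]]]]]; last first.
    by apply: restr_no_neg; apply: (hneg a simR ha).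
  case/restr_DR: ha => b [n [hb hn ea]].
  case/restr_DR: ha' => b' [n' [hb' hn' ea']].
  have enN : n = N.
    apply/eqP; rewrite eqn_leq hn /=; rewrite leqNgt; apply/negP => hnN.
    by apply: hna; exists (iter n.+1 g b); apply/mem_restr; exists b, n.
  have en' : n' = 0%N.
    case: n' hn' ea' => [//|n''] hn' ea'.
    by case: hna'; exists (iter n'' g b'); apply/mem_restr; exists b', n''.
  move: haa'; rewrite ea ea' enN en' /= => h.
  by have := hB _ _ hb hb'; lra.
Qed.
End Restr.

Definition smax (W : seq rat) := foldr (fun w acc => if acc < w then w else acc) 0 W.
Definition smin (W : seq rat) := foldr (fun w acc => if w < acc then w else acc) 0 W.
Lemma smaxP {W w} : w \in W -> w <= smax W.
Proof.
elim: W => [//|x W IH]; rewrite inE /= => /orP[/eqP->|hw].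
  by case: ifP => // /negbT; rewrite -leNgt.
by case: ifP => h; have := IH hw => // h2; move: h; lra.
Qed.
Lemma sminP {W w} : w \in W -> smin W <= w.
Proof.
elim: W => [//|x W IH]; rewrite inE /= => /orP[/eqP->|hw].
  by case: ifP => // /negbT; rewrite -leNgt.
by case: ifP => h; have := IH hw => // h2; move: h; lra.
Qed.

Lemma cover {g gi d} (W : seq rat) : incr g -> cancel g gi -> cancel gi g -> 0 < d ->
  (forall x, x + d <= g x) -> W != [::] ->
  exists K, Pgd Pos (restr g (map (iter K gi) W) (K + K).+1) /\
            forall w, w \in W -> (w, g w) \in restr g (map (iter K gi) W) (K + K).+1.
Proof.
move=> gI gK giK d0 gd Wn.
have gup : forall x, x < g x by move=> x; have := gd x; lra.
set T := smax W - smin W.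
have T0 : 0 <= T.
  have [w hw] : exists w, w \in W by move: Wn; case: (W) => // a s _; exists a; rewrite inE eqxx.
  by have := smaxP hw; have := sminP hw; rewrite /T; lra.
set K := Num.bound (T / d).
have hK : T < K%:R * d.
  by rewrite -ltr_pdivrMr //; apply: archi_boundP; apply: divr_ge0 => //; apply: ltW.
exists K; split.
- apply: restr_good => //.
  + by move: Wn; case: (W).
  + move=> b b' /mapP [w hw ->] /mapP [w' hw' ->].
    have e : iter (K + K).+1 g (iter K gi w) = iter K.+1 g w.
      by rewrite -addSn iterD (iter_giK giK).
    rewrite e.
    have h1 := iter_g_ge d0 gd K.+1 w.
    have h2 := iter_gi_le giK d0 gd K w'.
    have := smaxP hw'; have := sminP hw.
    rewrite -natr1 mulrDl mul1r in h1.
    move: h1 h2 hK d0 T0; rewrite /T; move: (K%:R * d) => k; clear; lra.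
- move=> w hw; apply/mem_restr; exists (iter K gi w), K; split.
  + by apply/mapP; exists w.
  + by rewrite ltnS leq_addr.
  + by rewrite (iter_giK giK).
  + by rewrite iterS (iter_giK giK).
Qed.

Lemma sign_posE v : sign_of v = Pos -> 0 < v.
Proof. by rewrite /sign_of; case: ifP => // _; case: ifP. Qed.

Lemma pi_fun {p a b b'} : is_pi p -> (a, b) \in p -> (a, b') \in p -> b = b'.
Proof.
move=> hp h1 h2; have e1 := hp _ _ _ _ h1 h2; have e2 := hp _ _ _ _ h2 h1.
by apply/eqP; rewrite eq_le !leNgt -e1 -e2 ltxx.
Qed.

Lemma pi_inj {p a a' b} : is_pi p -> (a, b) \in p -> (a', b) \in p -> a = a'.
Proof.
move=> hp h1 h2; have e1 := hp _ _ _ _ h1 h2; have e2 := hp _ _ _ _ h2 h1.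
by apply/eqP; rewrite eq_le !leNgt e1 e2 ltxx.
Qed.

Lemma pos_pair {p a b} : Psign Pos p -> (a, b) \in p -> a < b.
Proof.
move=> [hpi hall] hab.
have hDR : in_DR p a by left; exists b.
case: (hall a hDR a simR hDR) => b' [[h1 /sign_posE]|[h1 /sign_posE]]; rewrite subr_gt0.
- by rewrite (pi_fun hpi hab h1).
- by move=> h; rewrite -(hpi _ _ _ _ h1 hab).
Qed.

Definition dmin (p : Defs.pmap) :=
  foldr (fun xy acc => if xy.2 - xy.1 < acc then xy.2 - xy.1 else acc) 1 p.

Lemma dminP {p} : (forall a b, (a, b) \in p -> a < b) ->
  0 < dmin p /\ forall a b, (a, b) \in p -> dmin p <= b - a.
Proof.
elim: p => [|[x y] p IH] hp /=; first by split.
have hp' : forall a b, (a, b) \in p -> a < b by move=> a b h; apply: hp; rewrite inE h orbT.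
have hxy : x < y by apply: hp; rewrite inE eqxx.
have [IH1 IH2] := IH hp'.
case: ifP => h; split.
- by rewrite subr_gt0.
- move=> a b; rewrite inE => /orP[/eqP[-> ->]|hab]; first exact: lexx.
  by have := IH2 _ _ hab; move: h; lra.
- exact: IH1.
- move=> a b; rewrite inE => /orP[/eqP[-> ->]|hab]; last exact: IH2.
  by move/negbT: h; rewrite -leNgt.
Qed.

Lemma pos_ext {p} : is_pi p -> (forall a b, (a, b) \in p -> a < b) ->
  exists g gi d, [/\ incr g, cancel g gi, cancel gi g, 0 < d &
     (forall x, x + d <= g x) /\ forall a b, (a, b) \in p -> g a = b].
Proof.
move=> hpi hpos.
have [f [h [fI fK hK fp]]] := interp hpi.
have [d0 dle] := dminP hpos.
have [gI gK giK gd gf] := maxtrick fI fK hK d0.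
exists (gmax f (dmin p)), (gmin h (dmin p)), (dmin p); split => //; split => //.
move=> a b hab; rewrite gf (fp _ _ hab) //.
by have := dle _ _ hab; lra.
Qed.

Lemma cofinal_pos {p} : Psign Pos p -> exists q, Pgd Pos q /\ extends q p.
Proof.
move=> hp.
have hpos : forall a b, (a, b) \in p -> a < b by move=> a b; apply: pos_pair.
have [g [gi [d [gI gK giK d0 [gd gp]]]]] := pos_ext hp.1 hpos.
have [K [hK hmem]] := cover (0 :: [seq xy.1 | xy <- p]) gI gK giK d0 gd isT.
exists (restr g [seq iter K gi i | i <- 0 :: [seq xy.1 | xy <- p]] (K + K).+1); split => //.
move=> [a b] hab; rewrite -(gp _ _ hab); apply: hmem.
by rewrite inE; apply/orP; right; apply/mapP; exists (a, b).
Qed.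

Definition gz (g gi : rat -> rat) (k : int) (x : rat) : rat :=
  match k with Posz n => iter n g x | Negz n => iter n.+1 gi x end.

Definition idx (g gi : rat -> rat) (c x : rat) : int :=
  epsilon (inhabits 0%R) (fun k : int => gz g gi k c <= x < gz g gi (k + 1) c).

Lemma sq1 (t : rat) : t <= t * t + 1. Proof. nra. Qed.
Lemma sq2 (t : rat) : - t <= t * t + 1. Proof. nra. Qed.
Lemma sq3 (t : rat) : 0 <= t * t. Proof. nra. Qed.

Section Z.
Variables (g gi : rat -> rat) (d : rat).
Hypotheses (gI : incr g) (gK : cancel g gi) (giK : cancel gi g) (d0 : 0 < d)
  (gd : forall x, x + d <= g x).

Local Notation gz := (gz g gi).

Lemma gz0 x : gz 0 x = x. Proof. by []. Qed.
Lemma gz1 x : gz 1 x = g x. Proof. by []. Qed.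

Lemma gzS k x : gz (k + 1) x = g (gz k x).
Proof.
case: k => [n|n].
- have -> : (Posz n + 1 = Posz n.+1)%R by rewrite -addn1 PoszD.
  by [].
- case: n => [|n]; first by rewrite /= giK.
  have -> : Negz n.+1 + 1 = Negz n.
    by rewrite !NegzE; lia.
  by rewrite /= giK.
Qed.

Lemma gzP k x : gz (k - 1) x = gi (gz k x).
Proof. by rewrite -{2}(subrK 1 k) gzS gK. Qed.

Lemma gz_add k l x : gz (k + l) x = gz k (gz l x).
Proof.
elim/int_rec: k => [|n IH|n IH]; first by rewrite add0r.
- rewrite (_ : Posz n.+1 = Posz n + 1); last by lia.
  by rewrite addrAC gzS IH -gzS.
- rewrite (_ : - Posz n.+1 = - Posz n - 1); last by lia.
  by rewrite addrAC gzP IH -gzP.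
Qed.

Lemma gzK k : cancel (gz k) (gz (- k)).
Proof. by move=> x; rewrite -gz_add addNr. Qed.

Lemma gz_incr k : incr (gz k).
Proof.
case: k => n x y hxy /=; first exact: (iter_incr gI).
exact: (iter_gi_incr gI giK n.+1).
Qed.

Lemma gz_pos j y : 0 < j -> y < gz j y.
Proof.
case: j => [[|n]|n] // _.
change (y < iter n.+1 g y).
have := iter_g_ge d0 gd n.+1 y.
have : 0 < n.+1%:R * d by apply: mulr_gt0.
lra.
Qed.

Lemma gz_lt k l x : k < l -> gz k x < gz l x.
Proof.
move=> hkl; have -> : l = (l - k) + k by rewrite subrK.
by rewrite gz_add; apply: gz_pos; rewrite subr_gt0.
Qed.

Lemma gz_le k l x : k <= l -> gz k x <= gz l x.
Proof. by rewrite le_eqVlt => /orP[/eqP->//|h]; apply/ltW/gz_lt. Qed.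

Lemma gz_ltE k l x : (gz k x < gz l x) = (k < l).
Proof.
case: (ltP k l) => h; first exact: gz_lt.
by apply/negbTE; rewrite -leNgt; apply: gz_le.
Qed.

Lemma gz_leE k l x : (gz k x <= gz l x) = (k <= l).
Proof. by rewrite !leNgt gz_ltE. Qed.

Lemma idx_ex c x : exists k : int, gz k c <= x < gz (k + 1) c.
Proof.
have [n hn] : exists n : nat, (x - c) * (x - c) + 1 < n%:R * d.
  exists (Num.bound (((x - c) * (x - c) + 1) / d)).
  rewrite -ltr_pdivrMr //; apply: archi_boundP; apply: divr_ge0; [apply: addr_ge0 => //; rewrite -expr2; exact: sqr_ge0|exact: ltW].
have s1 := sq1 (x - c); have s2 := sq2 (x - c); have s3 := sq3 (x - c).
have h1 : gz (- n%:Z) c <= x.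
  case: n hn => [|m] hn; first by move: hn; rewrite mul0r; lra.
  change (iter m.+1 gi c <= x).
  have := iter_gi_le giK d0 gd m.+1 c; lra.
have h2 : x < gz n c.
  have := iter_g_ge d0 gd n c; change (gz n c) with (iter n g c); lra.
have hv0 : (fun i : nat => gz (i%:Z - n%:Z) c) 0%N <= x by rewrite /= sub0r.
have hvN : x < (fun i : nat => gz (i%:Z - n%:Z) c) (n + n)%N by rewrite /= PoszD addrK.
have [i [hi hi1 hi2]] := @find_step (fun i : nat => gz (i%:Z - n%:Z) c) x (n + n)%N hv0 hvN.
exists (i%:Z - n%:Z); apply/andP; split => //.
by rewrite (_ : i%:Z - n%:Z + 1 = (i.+1)%:Z - n%:Z) //; lia.
Qed.

Lemma idx_uniq {c x k l} : gz k c <= x < gz (k + 1) c -> gz l c <= x < gz (l + 1) c -> k = l.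
Proof.
move=> /andP[h1 h2] /andP[h3 h4].
case: (ltgtP k l) => // hkl.
- have : gz (k + 1) c <= gz l c by rewrite gz_leE; lia.
  by move=> h5; exfalso; lra.
- have : gz (l + 1) c <= gz k c by rewrite gz_leE; lia.
  by move=> h5; exfalso; lra.
Qed.

Lemma idxP c x : gz (idx g gi c x) c <= x < gz (idx g gi c x + 1) c.
Proof.
exact: (epsilon_spec (inhabits 0%R) (fun k : int => gz k c <= x < gz (k + 1) c) (idx_ex c x)).
Qed.

Lemma idxE c x k : gz k c <= x < gz (k + 1) c -> idx g gi c x = k.
Proof. by move=> h; apply: (idx_uniq (idxP c x) h). Qed.

End Z.
Arguments gzS {g gi d}. Arguments gzP {g gi d}. Arguments gz_add {g gi d}.
Arguments gzK {g gi d}. Arguments gz_incr {g gi}. Arguments gz_pos {g gi d}.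
Arguments gz_lt {g gi d}. Arguments gz_le {g gi d}. Arguments gz_ltE {g gi d}.
Arguments gz_leE {g gi d}. Arguments idx_ex {g gi d}. Arguments idx_uniq {g gi d}.
Arguments idxP {g gi d}. Arguments idxE {g gi d}.

Definition conj (g1 gi1 g2 gi2 b : rat -> rat) (c x : rat) : rat :=
  gz g1 gi1 (idx g2 gi2 c x) (b (gz g2 gi2 (- idx g2 gi2 c x) x)).

Section Conj.
Variables (g1 gi1 g2 gi2 b bi : rat -> rat) (d1 d2 c : rat).
Hypotheses (g1I : incr g1) (g1K : cancel g1 gi1) (gi1K : cancel gi1 g1) (d10 : 0 < d1)
  (g1d : forall x, x + d1 <= g1 x).
Hypotheses (g2I : incr g2) (g2K : cancel g2 gi2) (gi2K : cancel gi2 g2) (d20 : 0 < d2)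
  (g2d : forall x, x + d2 <= g2 x).
Hypotheses (bI : incr b) (bc : b c = c) (bgc : b (g2 c) = g1 c).

Local Notation z1 := (gz g1 gi1).
Local Notation z2 := (gz g2 gi2).
Local Notation i2 := (idx g2 gi2 c).
Local Notation i1 := (idx g1 gi1 c).
Local Notation a := (conj g1 gi1 g2 gi2 b c).

Lemma conj_win x : z1 (i2 x) c <= a x < z1 (i2 x + 1) c.
Proof.
have /andP[h1 h2] := idxP gi2K d20 g2d c x.
set k := i2 x in h1 h2 *.
rewrite /conj -/k.
have e1 : z2 (- k) (z2 k c) = c by rewrite (gzK g2K gi2K d20).
have e2 : z2 (- k) (z2 (k + 1) c) = g2 c.
  by rewrite -(gz_add g2K gi2K d20) addrA addNr add0r.
have y1 : c <= z2 (- k) x by rewrite -{1}e1 (incr_le (gz_incr g2I gi2K _)).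
have y2 : z2 (- k) x < g2 c by rewrite -e2 (incr_lt (gz_incr g2I gi2K _)).
have w1 : c <= b (z2 (- k) x) by rewrite -{1}bc (incr_le bI).
have w2 : b (z2 (- k) x) < g1 c by rewrite -bgc (incr_lt bI).
apply/andP; split.
- by rewrite (incr_le (gz_incr g1I gi1K _)).
- rewrite (gz_add g1K gi1K d10) (incr_lt (gz_incr g1I gi1K _)) //.
Qed.

Lemma conj_idx x : i1 (a x) = i2 x.
Proof. exact: (idxE g1K gi1K d10 g1d c (a x) (i2 x) (conj_win x)). Qed.

Lemma conj_g2 x : a (g2 x) = g1 (a x).
Proof.
have /andP[h1 h2] := idxP gi2K d20 g2d c x.
have ek : i2 (g2 x) = i2 x + 1.
  apply: (idxE g2K gi2K d20 g2d); apply/andP; split.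
  - by rewrite (gzS gi2K d20) (incr_le g2I).
  - by rewrite (gzS gi2K d20) (incr_lt g2I).
rewrite /conj ek.
have -> : z2 (- (i2 x + 1)) (g2 x) = z2 (- i2 x) x.
  rewrite -(gz1 g2 gi2 x) -(gz_add g2K gi2K d20); congr z2.
  by rewrite opprD addrNK.
by rewrite (gzS gi1K d10).
Qed.

Lemma conj_incr : incr a.
Proof.
move=> x y hxy.
have /andP[hx1 hx2] := idxP gi2K d20 g2d c x.
have /andP[hy1 hy2] := idxP gi2K d20 g2d c y.
have /andP[ax1 ax2] := conj_win x.
have /andP[ay1 ay2] := conj_win y.
case: (ltgtP (i2 x) (i2 y)) => hk.
- apply: lt_le_trans ax2 (le_trans _ ay1).
  by rewrite (gz_leE g1K gi1K d10 g1d); lia.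
- have : z2 (i2 y + 1) c <= z2 (i2 x) c by rewrite (gz_leE g2K gi2K d20 g2d); lia.
  by move=> h; exfalso; move: hxy hx1 hy2 h; lra.
- rewrite /conj -hk; apply: (gz_incr g1I gi1K); apply: bI.
  exact: (gz_incr g2I gi2K).
Qed.

Lemma conj_fix r : c <= r -> r < g2 c -> b r = r -> a r = r.
Proof.
move=> h1 h2 br.
have e : i2 r = 0 by apply: (idxE g2K gi2K d20 g2d); rewrite /= h1 h2.
by rewrite /conj e oppr0 /= br.
Qed.

Lemma conj_K (bK : cancel b bi) : cancel a (conj g2 gi2 g1 gi1 bi c).
Proof.
move=> x; rewrite {1}/conj conj_idx /conj.
rewrite (gzK g1K gi1K d10) bK.
have := gzK g2K gi2K d20 (- i2 x) x; rewrite opprK; apply.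
Qed.
End Conj.

Lemma in_domE p x : in_dom p x <-> x \in [seq xy.1 | xy <- p].
Proof.
split; first by case=> y h; apply/mapP; exists (x, y).
by case/mapP => -[u v] h /= ->; exists v.
Qed.
Lemma in_rngE p x : in_rng p x <-> x \in [seq xy.2 | xy <- p].
Proof.
split; first by case=> y h; apply/mapP; exists (y, x).
by case/mapP => -[u v] h /= ->; exists u.
Qed.
Definition DRs (p : Defs.pmap) := [seq xy.1 | xy <- p] ++ [seq xy.2 | xy <- p].
Lemma in_DRE p x : in_DR p x <-> x \in DRs p.
Proof.
rewrite /in_DR in_domE in_rngE mem_cat; split; first by case=> ->; rewrite ?orbT.
by case/orP; [left|right].
Qed.

Lemma count_lt (P Q : pred rat) s z : subpred P Q -> z \in s -> Q z -> ~~ P z ->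
  (count P s < count Q s)%N.
Proof.
move=> sPQ; elim: s => [//|x s IH]; rewrite inE /= => /orP[/eqP<-|hz] hQ hP.
  by rewrite hQ (negbTE hP) add0n add1n ltnS; apply: sub_count.
have h1 := IH hz hQ hP.
have h2 : (P x <= Q x)%N by case: (P x) (sPQ x) => // ->.
move: h1 h2; rewrite /=; lia.
Qed.

Lemma incr_inv {f h} : incr f -> cancel f h -> cancel h f -> incr h.
Proof. by move=> fI fK hK x y hxy; rewrite -(incr_lt fI) !hK. Qed.

Definition smaxd (d : rat) (W : seq rat) := foldr (fun w acc => if acc < w then w else acc) d W.
Definition smind (d : rat) (W : seq rat) := foldr (fun w acc => if w < acc then w else acc) d W.
Lemma smaxdP d W : (forall w, w \in W -> w <= smaxd d W) /\ d <= smaxd d W /\ smaxd d W \in d :: W.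
Proof.
elim: W => [|x W [IH1 [IH2 IH3]]] /=; first by rewrite inE eqxx.
case: ifP => h; split.
- move=> w; rewrite inE => /orP[/eqP->//|hw]; have := IH1 _ hw; move: h; lra.
- by split; [move: h IH2; lra| rewrite !inE eqxx orbT].
- move=> w; rewrite inE => /orP[/eqP->|hw]; last exact: IH1.
  by move/negbT: h; rewrite -leNgt.
- split => //; move: IH3; rewrite !inE => /orP[->//|->]; rewrite !orbT //.
Qed.
Lemma smindP d W : (forall w, w \in W -> smind d W <= w) /\ smind d W <= d.
Proof.
elim: W => [|x W [IH1 IH2]] /=; first by [].
case: ifP => h; split.
- move=> w; rewrite inE => /orP[/eqP->//|hw]; have := IH1 _ hw; move: h; lra.
- by move: h IH2; lra.
- move=> w; rewrite inE => /orP[/eqP->|hw]; last exact: IH1.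
  by move/negbT: h; rewrite -leNgt.
- done.
Qed.

Lemma start_end p s e : Pgd Pos p -> in_DR p s -> ~ in_rng p s -> in_DR p e -> ~ in_dom p e ->
  s < e.
Proof.
move=> [[hpi hall] [_ hbad]] hs hns he hne.
case: (ltgtP s e) => // h.
- exfalso; apply: (hbad e s); split => //; split => //; split => //.
  left; split => //; split; first exact: hall.
  by split; [exact: hall| move=> x hx _ _; exact: hall].
- by exfalso; subst; case: he.
Qed.

Lemma choose_c {p} : Pgd Pos p -> exists c,
  [/\ ~ in_DR p c, (forall x, in_DR p x -> ~ in_rng p x -> x < c) &
      (forall x, in_DR p x -> ~ in_dom p x -> c < x)].
Proof.
move=> hp.
set X := DRs p.
set starts := [seq x <- X | x \notin [seq xy.2 | xy <- p]].
have [m1 m2] := smindP 0 X.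
set lo := smaxd (smind 0 X - 1) starts.
have [l1 [l2 l3]] := smaxdP (smind 0 X - 1) starts.
set hi := smind (lo + 1) [seq x <- X | lo < x].
have [h1 h2] := smindP (lo + 1) [seq x <- X | lo < x].
have lohi : lo < hi.
  rewrite -/lo -/hi in h1 h2.
  case: (smindP (lo + 1) [seq x <- X | lo < x]) => _ _.
  suff : forall W, (forall w, w \in W -> lo < w) -> lo < smind (lo + 1) W.
    by apply => w; rewrite mem_filter => /andP[].
  elim => [|w W IH] hW /=; first by lra.
  case: ifP => _; first by apply: hW; rewrite inE eqxx.
  by apply: IH => w' hw'; apply: hW; rewrite inE hw' orbT.
exists ((lo + hi) / 2); split.
- move/in_DRE; rewrite -/X => hc.
  case: (leP ((lo + hi) / 2) lo) => hcl; first by move: hcl lohi; lra.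
  have := h1 ((lo + hi) / 2); rewrite mem_filter hcl hc => /(_ isT).
  by rewrite -/lo -/hi; move: lohi; lra.
- move=> x hx hnr.
  have hxX : x \in X by apply/in_DRE.
  have : x \in starts by rewrite mem_filter hxX andbT; apply/negP => /in_rngE.
  by move/l1; rewrite -/lo; move: lohi; lra.
- move=> x hx hnd.
  have xlo : lo < x.
    move: l3; rewrite inE -/lo => /orP[/eqP->|].
    + have hxX : x \in X by apply/in_DRE.
      have := m1 x hxX; lra.
    + rewrite mem_filter => /andP[hs hsX].
      apply: (start_end _ _ _ hp) => //; first by apply/in_DRE.
      by move/in_rngE; apply/negP.
  have hxX : x \in X by apply/in_DRE.
  have := h1 x; rewrite mem_filter xlo hxX => /(_ isT); rewrite -/lo -/hi.
  move: lohi; lra.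
Qed.

Lemma amalg_pos {p0 p1 p2} : Pgd Pos p0 -> Psign Pos p1 -> Psign Pos p2 ->
  extends p1 p0 -> extends p2 p0 ->
  exists p3 alpha, Pgd Pos p3 /\ is_aut alpha /\
    (forall x, in_DR p0 x -> alpha x = x) /\
    extends p3 p1 /\ extends p3 (act alpha p2).
Proof.
move=> hp0 hp1 hp2 e1 e2.
have [c [hc hcs hce]] := choose_c hp0.
have pos1 : forall a b, (a, b) \in p1 -> a < b by move=> a b; apply: pos_pair.
have pos2 : forall a b, (a, b) \in p2 -> a < b by move=> a b; apply: pos_pair.
have pos0 : forall a b, (a, b) \in p0 -> a < b by move=> a b; apply: pos_pair hp0.1.
have [g1 [gi1 [d1 [g1I g1K gi1K d10 [g1d g1p]]]]] := pos_ext hp1.1 pos1.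
have [g2 [gi2 [d2 [g2I g2K gi2K d20 [g2d g2p]]]]] := pos_ext hp2.1 pos2.
have g1p0 : forall a b, (a, b) \in p0 -> g1 a = b by move=> a b h; apply: g1p; apply: e1.
have g2p0 : forall a b, (a, b) \in p0 -> g2 a = b by move=> a b h; apply: g2p; apply: e2.
have cg1 : c < g1 c by have := g1d c; lra.
have cg2 : c < g2 c by have := g2d c; lra.
set R := [seq xy.2 | xy <- p0 & (xy.1 < c) && (c < xy.2)].
have hR : forall r, r \in R -> [/\ c < r, r < g1 c & r < g2 c].
  move=> r /mapP [[x y] + ->]; rewrite mem_filter /= => /andP[/andP[hx hy] hxy].
  split => //.
  - by rewrite -(g1p0 _ _ hxy) (incr_lt g1I).
  - by rewrite -(g2p0 _ _ hxy) (incr_lt g2I).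
set L := [:: (c, c), (g2 c, g1 c) & [seq (r, r) | r <- R]].
have hL : forall u v, (u, v) \in L ->
    (u = v /\ [/\ c <= u, u < g2 c & u < g1 c]) \/ (u = g2 c /\ v = g1 c).
  move=> u v; rewrite !inE => /orP[/eqP[-> ->]|/orP[/eqP[-> ->]|/mapP[r hr [-> ->]]]].
  - by left; split => //; split.
  - by right.
  - by have [h1 h2 h3] := hR r hr; left; split => //; split => //; apply: ltW.
have Lpi : is_pi L.
  move=> u v u' v' /hL [[-> [h1 h2 h3]]|[-> ->]] /hL [[-> [h1' h2' h3']]|[-> ->]] //.
  - by rewrite h2 h3.
  - by rewrite !ltNge (ltW h2') (ltW h3').
  - by rewrite !ltxx.
have [b [bi [bI bK biK bp]]] := interp Lpi.
have bc : b c = c by apply: bp; rewrite inE eqxx.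
have bgc : b (g2 c) = g1 c by apply: bp; rewrite !inE eqxx orbT.
have br : forall r, r \in R -> b r = r.
  by move=> r hr; apply: bp; rewrite !inE; apply/orP; right; apply/orP; right; apply/mapP; exists r.
have biI : incr bi := incr_inv bI bK biK.
have bic : bi c = c by rewrite -{1}bc bK.
have bigc : bi (g1 c) = g2 c by rewrite -bgc bK.
set al := conj g1 gi1 g2 gi2 b c.
set al' := conj g2 gi2 g1 gi1 bi c.
have alI : incr al := conj_incr _ _ _ _ _ _ _ _ g1I g1K gi1K d10 g1d g2I g2K gi2K d20 g2d bI bc bgc.
have alK : cancel al al' :=
  conj_K _ _ _ _ _ _ _ _ _ g1I g1K gi1K d10 g1d g2I g2K gi2K d20 g2d bI bc bgc bK.
have alK' : cancel al' al :=
  conj_K _ _ _ _ _ _ _ _ _ g2I g2K gi2K d20 g2d g1I g1K gi1K d10 g1d biI bic bigc biK.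
have alg : forall x, al (g2 x) = g1 (al x) :=
  conj_g2 _ _ _ _ _ _ _ _ gi1K d10 g2I g2K gi2K d20 g2d.
have fwd : forall x y, (x, y) \in p0 -> al x = x -> al y = y.
  by move=> x y hxy ax; rewrite -{1}(g2p0 _ _ hxy) alg ax (g1p0 _ _ hxy).
have bwd : forall x y, (x, y) \in p0 -> al y = y -> al x = x.
  move=> x y hxy ay; apply: (incr_inj g1I).
  by rewrite -alg (g2p0 _ _ hxy) ay (g1p0 _ _ hxy).
have fixR : forall x y, (x, y) \in p0 -> x < c -> c < y -> al y = y.
  move=> x y hxy hx hy.
  have hyR : y \in R by apply/mapP; exists (x, y) => //; rewrite mem_filter /= hx hy.
  have [_ _ h3] := hR y hyR.
  exact: (conj_fix _ _ _ _ _ _ _ g2K gi2K d20 g2d y (ltW hy) h3 (br y hyR)).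
set btw := fun d z : rat => ((c < z) && (z < d)) || ((d < z) && (z < c)).
have main : forall n d, (count (btw d) (DRs p0) < n)%N -> in_DR p0 d -> al d = d.
  elim => [//|n IH] d hn hd.
  case: (ltgtP d c) => hdc.
  - have [y hdy] : in_dom p0 d.
      case: (boolP (d \in [seq xy.1 | xy <- p0])) => [/in_domE //|hnd].
      by exfalso; have := hce d hd (fun h => negP hnd (proj1 (in_domE _ _) h)); lra.
    have hy : in_DR p0 y by right; exists d.
    case: (ltgtP y c) => hyc.
    + apply: (bwd _ _ hdy); apply: (IH y _ hy).
      have hdy' := pos0 _ _ hdy.
      suff : (count (btw y) (DRs p0) < count (btw d) (DRs p0))%N by move: hn; lia.
      apply: (@count_lt _ _ _ y).
      * move=> z; rewrite /btw => /orP[/andP[h1 h2]|/andP[h1 h2]]; apply/orP.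
        - by exfalso; lra.
        - by right; apply/andP; split; lra.
      * exact: (proj1 (in_DRE _ _) hy).
      * by rewrite /btw hdy' hyc orbT.
      * by rewrite /btw !ltxx /= andbF.
    + by apply: (bwd _ _ hdy); apply: (fixR _ _ hdy).
    + by exfalso; apply: hc; rewrite -hyc.
  - have [x hxd] : in_rng p0 d.
      case: (boolP (d \in [seq xy.2 | xy <- p0])) => [/in_rngE //|hnr].
      by exfalso; have := hcs d hd (fun h => negP hnr (proj1 (in_rngE _ _) h)); lra.
    have hx : in_DR p0 x by left; exists d.
    case: (ltgtP x c) => hxc.
    + exact: (fixR _ _ hxd).
    + apply: (fwd _ _ hxd); apply: (IH x _ hx).
      have hxd' := pos0 _ _ hxd.
      suff : (count (btw x) (DRs p0) < count (btw d) (DRs p0))%N by move: hn; lia.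
      apply: (@count_lt _ _ _ x).
      * move=> z; rewrite /btw => /orP[/andP[h1 h2]|/andP[h1 h2]]; apply/orP.
        - by left; apply/andP; split; lra.
        - by exfalso; lra.
      * exact: (proj1 (in_DRE _ _) hx).
      * by rewrite /btw hxc hxd'.
      * by rewrite /btw !ltxx /= andbF.
    + by exfalso; apply: hc; rewrite -hxc.
  - by exfalso; apply: hc; rewrite -hdc.
set W := 0 :: [seq xy.1 | xy <- p1] ++ [seq al xy.1 | xy <- p2].
have [K [hK hmem]] := cover W g1I g1K gi1K d10 g1d isT.
exists (restr g1 [seq iter K gi1 i | i <- W] (K + K).+1), al.
split => //; split; first by split => //; exists al'.
split; first by move=> x hx; apply: (main _ x (ltnSn _) hx).
split.
- move=> [x y] hxy; rewrite -(g1p _ _ hxy); apply: hmem.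
  by rewrite inE mem_cat; apply/orP; right; apply/orP; left; apply/mapP; exists (x, y).
- move=> z /mapP [[x y] hxy ->] /=; rewrite -(g2p _ _ hxy) alg; apply: hmem.
  by rewrite inE mem_cat; apply/orP; right; apply/orP; right; apply/mapP; exists (x, y).
Qed.

Definition swp (xy : rat * rat) := (xy.2, xy.1).
Definition swap (p : Defs.pmap) : Defs.pmap := map swp p.
Lemma swpK : involutive swp. Proof. by case. Qed.
Lemma swapK : involutive swap. Proof. by move=> p; rewrite /swap -map_comp map_id_in // => -[]. Qed.
Lemma mem_swap p a b : ((a, b) \in swap p) = ((b, a) \in p).
Proof. by rewrite -[(a, b)]/(swp (b, a)) mem_map //; apply: (can_inj swpK). Qed.

Definition flip (s : sgn) := match s with Pos => Neg | Neg => Pos | Zero => Zero end.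
Lemma sign_opp v : sign_of (- v) = flip (sign_of v).
Proof.
rewrite /sign_of oppr_gt0 oppr_eq0.
by case: (ltgtP v 0) => //= h.
Qed.

Lemma swap_dom p x : in_dom (swap p) x <-> in_rng p x.
Proof. by split=> -[y h]; exists y; rewrite ?mem_swap in h *. Qed.
Lemma swap_rng p x : in_rng (swap p) x <-> in_dom p x.
Proof. by split=> -[y h]; exists y; rewrite ?mem_swap in h *. Qed.
Lemma swap_DR p x : in_DR (swap p) x <-> in_DR p x.
Proof. by rewrite /in_DR swap_dom swap_rng; split=> -[]; auto. Qed.

Lemma swap_parity p x s : parity (swap p) x s <-> parity p x (flip s).
Proof.
have fl : forall s, flip (flip s) = s by case.
split=> -[y [[h1 h2]|[h1 h2]]]; exists y; rewrite ?mem_swap in h1 *.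
- by right; split => //; rewrite -opprB sign_opp h2.
- by left; split => //; rewrite -opprB sign_opp h2.
- by right; split => //; rewrite -opprB sign_opp h2 fl.
- by left; split => //; rewrite -opprB sign_opp h2 fl.
Qed.

Lemma swap_related p a b : related (swap p) a b -> related p a b.
Proof.
rewrite /related !swap_parity /=.
case=> [->|[[hpa hcl]|[hpa hcl]]]; [by left| right; right | right; left].
- split => //.
  case: hcl => [[c [h1 h2]]|[[c [h1 h2]]|[[c [h1 h2]]|[c [h1 h2]]]]]; rewrite mem_swap in h1.
  + by left; exists c.
  + by right; left; exists c.
  + by right; right; left; exists c.
  + by right; right; right; exists c.
- split => //.
  case: hcl => [[c [h1 h2]]|[[c [h1 h2]]|[[c [h1 h2]]|[c [h1 h2]]]]]; rewrite mem_swap in h1.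
  + by left; exists c.
  + by right; left; exists c.
  + by right; right; left; exists c.
  + by right; right; right; exists c.
Qed.

Lemma swap_related' p a b : related p a b -> related (swap p) a b.
Proof. by move=> h; apply: swap_related; rewrite swapK. Qed.

Lemma sim_mono (R1 R2 : relation rat) a b : (forall x y, R1 x y -> R2 x y) ->
  clos_refl_sym_trans rat R1 a b -> clos_refl_sym_trans rat R2 a b.
Proof.
move=> h; elim => [x y /h|x|x y _ IH|x y z _ IH1 _ IH2].
- exact: rst_step.
- exact: rst_refl.
- exact: rst_sym.
- exact: rst_trans IH2.
Qed.

Lemma swap_sim p a b : sim (swap p) a b <-> sim p a b.
Proof.
split; apply: sim_mono => x y; [exact: swap_related|exact: swap_related'].
Qed.

Lemma swap_orb p x s : orbital_parity (swap p) x s <-> orbital_parity p x (flip s).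
Proof.
split=> h y hs hy.
- by apply/swap_parity; apply: h; [apply/swap_sim|apply/swap_DR].
- by apply/swap_parity; apply: h; [apply/swap_sim|apply/swap_DR].
Qed.

Lemma swap_pi p : is_pi p -> is_pi (swap p).
Proof.
move=> h a b a' b'; rewrite !mem_swap => h1 h2.
by rewrite (h _ _ _ _ h1 h2).
Qed.

Lemma swap_Psign {s p} : Psign s p -> Psign (flip s) (swap p).
Proof.
move=> [hpi hall]; split; first exact: swap_pi.
have fl : flip (flip s) = s by case: s {hall}.
move=> a /swap_DR ha; apply: (proj2 (swap_orb p a (flip s))); rewrite fl; exact: hall.
Qed.

Lemma swap_bp p a a' : bad_pair (swap p) a a' -> bad_pair p a a'.
Proof.
move=> [ha [ha' [haa' hh]]]; split; first by apply/swap_DR.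
split; first by apply/swap_DR.
split => //.
case: hh => [[[b1 [b2 b3]] [h1 h2]]|[[b1 [b2 b3]] [h1 h2]]].
- right; split; last by split => h; [apply: h2; apply/swap_rng|apply: h1; apply/swap_dom].
  split; first exact: (proj1 (swap_orb _ _ Pos) b1).
  split; first exact: (proj1 (swap_orb _ _ Pos) b2).
  by move=> x hx h3 h4; exact: (proj1 (swap_orb _ _ Pos) (b3 x (proj2 (swap_DR _ _) hx) h3 h4)).
- left; split; last by split => h; [apply: h2; apply/swap_rng|apply: h1; apply/swap_dom].
  split; first exact: (proj1 (swap_orb _ _ Neg) b1).
  split; first exact: (proj1 (swap_orb _ _ Neg) b2).
  by move=> x hx h3 h4; exact: (proj1 (swap_orb _ _ Neg) (b3 x (proj2 (swap_DR _ _) hx) h3 h4)).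
Qed.

Lemma swap_Pgd {s p} : Pgd s p -> Pgd (flip s) (swap p).
Proof.
move=> [hs [[[a ha] hsc] hb]]; split; first exact: swap_Psign.
split.
- split; first by exists a; apply/swap_DR.
  by move=> x y /swap_DR hx /swap_DR hy; apply/swap_sim; apply: hsc.
- by move=> x y /swap_bp; apply: hb.
Qed.

Lemma swap_ext {q p} : extends q p -> extends (swap q) (swap p).
Proof. by move=> h [a b]; rewrite !mem_swap; apply: h. Qed.

Lemma swap_act f p : act f (swap p) = swap (act f p).
Proof. by rewrite /act /swap -!map_comp. Qed.

Theorem proposition4p1 :
  forall s : sgn, s = Pos \/ s = Neg ->
  (forall p, Psign s p -> exists q, Pgd s q /\ extends q p) /\
  (forall p0 p1 p2, Pgd s p0 -> Pgd s p1 -> Pgd s p2 ->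
     extends p1 p0 -> extends p2 p0 ->
     exists p3 alpha, Pgd s p3 /\ is_aut alpha /\
       (forall x, in_DR p0 x -> alpha x = x) /\
       extends p3 p1 /\ extends p3 (act alpha p2)).
Proof.
move=> s [->|->]; split.
- by move=> p hp; exact: cofinal_pos hp.
- move=> p0 p1 p2 h0 h1 h2 e1 e2.
  exact: (amalg_pos h0 h1.1 h2.1 e1 e2).
- move=> p hp.
  have [q [hq eq]] := cofinal_pos (swap_Psign hp).
  exists (swap q); split; first exact: (swap_Pgd hq).
  by rewrite -(swapK p); apply: swap_ext.
- move=> p0 p1 p2 h0 h1 h2 e1 e2.
  have [p3 [al [h3 [hal [hfix [x1 x2]]]]]] :=
    amalg_pos (swap_Pgd h0) (swap_Pgd h1).1 (swap_Pgd h2).1 (swap_ext e1) (swap_ext e2).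
  exists (swap p3), al; split; first exact: (swap_Pgd h3).
  split => //; split; first by move=> x hx; apply: hfix; apply/swap_DR.
  split; first by rewrite -(swapK p1); apply: swap_ext.
  by rewrite -(swapK p2) swap_act; apply: swap_ext.
Qed.
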